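(* Let $\Gamma$ be a distance-regular graph with valency $k\geq 3$, diameter $D\geq 3$, and distinct eigenvalues $k=\theta_0>\theta_1>\cdots>\theta_D$, such that $\theta_1\leq 1$. Then $D=3$ and $\Gamma$ is isomorphic to the complete bipartite graph $K_{k+1,k+1}$ with a perfect matching removed.
   Context: All graphs are finite, simple, undirected and connected. $\Gamma$ is distance-regular with diameter $D$ if there are integers $b_i,c_i$ such that for all vertices $x,y$ with $d(x,y)=i$, $y$ has exactly $c_i$ neighbours at distance $i-1$ from $x$ and $b_i$ neighbours at distance $i+1$ from $x$; the valency is $k=b_0$. Eigenvalues are those of the adjacency matrix. *)

(* Defs.v *)
From HB Require Import structures.
From mathcomp Require Import all_boot all_order all_algebra.
Set Implicit Arguments. Unset Strict Implicit. Unset Printing Implicit Defensive.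
Import Order.TTheory GRing.Theory Num.Theory.

Section Graphs.
Variable T : finType.
Variable adj : rel T.

Definition simple_graph : Prop := symmetric adj /\ irreflexive adj.
Definition connected_graph : Prop := forall x y : T, connect adj x y.

Fixpoint within (n : nat) (x y : T) : bool :=
  match n with
  | 0 => x == y
  | n'.+1 => within n' x y || [exists z, within n' x z && adj z y]
  end.

(* path distance: least n with a walk of length <= n (equals #|T| if
   y is unreachable from x, which never happens for connected graphs) *)
Definition dist (x y : T) : nat := find (fun n => within n x y) (iota 0 #|T|).

Definition diameter : nat := \max_(x : T) \max_(y : T) dist x y.

Definition distance_regular (b c : nat -> nat) : Prop :=
  forall x y : T,
    #|[set z | adj y z & dist x z + 1 == dist x y]| = c (dist x y) /\
    #|[set z | adj y z & dist x z == (dist x y).+1]| = b (dist x y).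

Definition adjmx (R : nzRingType) : 'M[R]_#|T| :=
  \matrix_(i, j) ((adj (enum_val i) (enum_val j))%:R)%R.
End Graphs.

(* K_{n,n} minus a perfect matching: vertices (i, side), i < n *)
Definition crown (n : nat) : rel ('I_n * bool) :=
  fun u v => (u.2 != v.2) && (u.1 != v.1).

Arguments crown n u v : clear implicits.

Definition graph_iso (T1 T2 : finType) (adj1 : rel T1) (adj2 : rel T2) : Prop :=
  exists f : T1 -> T2, bijective f /\ forall x y, adj2 (f x) (f y) = adj1 x y.

(* Main.v *)
Require Import Defs.
From HB Require Import structures.
From mathcomp Require Import all_boot all_order all_algebra.
From mathcomp Require Import complex.
From mathcomp Require Import zify ring lra.
Import Order.TTheory GRing.Theory Num.Theory.
Local Open Scope ring_scope.

Lemma const_eig (R : realFieldType) (T : finType) (adj : rel T) (k : nat)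
  (hconn : connected_graph adj)
  (hdeg : forall x, \sum_y (adj x y)%:R = k%:R :> R)
  (u : T -> R) (hu : forall x, \sum_y (adj x y)%:R * u y = k%:R * u x) :
  forall x y, u x = u y.
Proof.
move=> x0 y0.
case: (@arg_maxP _ _ T x0 xpredT u isT) => m _ Hm.
have cl : forall x y, u x = u m -> adj x y -> u y = u m.
  move=> x y hx hxy.
  have h0 : \sum_z (adj x z)%:R * (u m - u z) = 0.
    under eq_bigr => z _ do rewrite mulrBr.
    by rewrite sumrB -mulr_suml hdeg hu hx subrr.
  have hnn : forall z, true -> 0 <= (adj x z)%:R * (u m - u z).
    move=> z _; apply: mulr_ge0; first by rewrite ler0n.
    by rewrite subr_ge0; apply: Hm.
  have := @psumr_eq0P _ _ _ _ hnn h0 y isT.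
  rewrite hxy mul1r => /eqP; rewrite subr_eq0 => /eqP <- //.
have all_m : forall y, u y = u m.
  move=> y; have /connectP [p hp ->] := hconn m y.
  have : u m = u m by [].
  move: hp; move: {1 2 4}m.
  elim: p => [|z p IH] w //= /andP [hwz hp] hw.
  by apply: IH => //; apply: cl hwz.
by rewrite !all_m.
Qed.

Local Open Scope sesquilinear_scope.

Lemma sum_rank (T : finType) (V : nmodType) (F : 'I_#|T| -> V) :
  \sum_i F i = \sum_u F (enum_rank u).
Proof.
rewrite (big_enum_val (A := T) (fun u => F (enum_rank u))) /=.
by apply: eq_bigr => i _; rewrite enum_valK.
Qed.

Section S.
Variables (R : rcfType) (T : finType) (adj : rel T).
Hypothesis hsym : symmetric adj.
Let C := R[i].
Let AC := adjmx adj C.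
Local Notation Re := (@complex.Re R).
Local Notation Im := (@complex.Im R).

Lemma AC_herm : AC ^t* = AC.
Proof.
apply/matrixP => i j; rewrite !mxE.
by rewrite conjC_nat hsym.
Qed.

Lemma AC_normal : AC \is normalmx.
Proof. by apply/normalmxP; rewrite AC_herm. Qed.

Lemma AC_hermsym : AC \is hermsymmx.
Proof. by apply/is_hermitianmxP; rewrite expr0 scale1r AC_herm. Qed.

Lemma AC_map : (adjmx adj R) ^ (real_complex R) = AC.
Proof. by apply/matrixP => i j; rewrite !mxE rmorph_nat. Qed.


Lemma row_eig (P : 'M[C]_#|T|) (d : 'rV[C]_#|T|) (i : 'I_#|T|) :
  P \in unitmx -> AC = invmx P *m diag_mx d *m P ->
  row i P *m AC = d 0 i *: row i P.
Proof.
move=> Pu hA.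
rewrite -row_mul hA !mulmxA mulmxV // mul1mx.
by rewrite row_mul row_diag_mx -scalemxAl -rowE.
Qed.

Lemma real_eig (r : R) : eigenvalue AC (real_complex R r) -> eigenvalue (adjmx adj R) r.
Proof.
rewrite !eigenvalue_root_char -AC_map -map_char_poly.
by rewrite (fmorph_root (real_complex R)).
Qed.


Lemma ReD (x y : C) : Re (x + y) = Re x + Re y. Proof. case: x => a b; case: y => c d; reflexivity. Qed.
Lemma ImD (x y : C) : Im (x + y) = Im x + Im y. Proof. case: x => a b; case: y => c d; reflexivity. Qed.
Lemma ReMn (x : C) n : Re (x *+ n) = Re x *+ n.
Proof. by elim: n => [|n IH]; rewrite ?mulr0n // !mulrS ReD IH. Qed.
Lemma ImMn (x : C) n : Im (x *+ n) = Im x *+ n.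
Proof. by elim: n => [|n IH]; rewrite ?mulr0n // !mulrS ImD IH. Qed.
Lemma Re_sum (I : finType) (F : I -> C) : Re (\sum_i F i) = \sum_i Re (F i).
Proof. by apply: (big_morph _ ReD). Qed.
Lemma Im_sum (I : finType) (F : I -> C) : Im (\sum_i F i) = \sum_i Im (F i).
Proof. by apply: (big_morph _ ImD). Qed.

Lemma const_rowC (v : 'rV[C]_#|T|) (k : nat) : connected_graph adj ->
  (forall x, \sum_y (adj x y)%:R = k%:R :> R) -> v *m AC = k%:R *: v ->
  forall j j', v 0 j = v 0 j'.
Proof.
move=> hconn hdeg hv.
have key : forall x, \sum_y v 0 (enum_rank y) *+ adj y x = v 0 (enum_rank x) *+ k.
  move=> x; move/matrixP: hv => /(_ 0 (enum_rank x)).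
  rewrite !mxE sum_rank => h; rewrite -mulr_natl -h.
  by apply: eq_bigr => y _; rewrite !mxE !enum_rankK mulr_natr.
have hRe : forall x y, Re (v 0 (enum_rank x)) = Re (v 0 (enum_rank y)).
  apply: (@const_eig _ _ _ _ hconn hdeg (fun t => _ (v 0 (enum_rank t)))) => x /=.
  rewrite mulr_natl -ReMn -(key x) Re_sum.
  by apply: eq_bigr => y _; rewrite ReMn mulr_natl hsym.
have hIm : forall x y, Im (v 0 (enum_rank x)) = Im (v 0 (enum_rank y)).
  apply: (@const_eig _ _ _ _ hconn hdeg (fun t => _ (v 0 (enum_rank t)))) => x /=.
  rewrite mulr_natl -ImMn -(key x) Im_sum.
  by apply: eq_bigr => y _; rewrite ImMn mulr_natl hsym.
move=> j j'; rewrite -(enum_valK j) -(enum_valK j').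
move: (hRe (enum_val j) (enum_val j')) (hIm (enum_val j) (enum_val j')).
by case: (v 0 _) => a b; case: (v 0 _) => a' b' /= -> ->.
Qed.


Lemma rc_real (x : R) : real_complex R x \is Num.real.
Proof. by rewrite /real_complex_def complex_real. Qed.

Lemma rc_conj (x : R) : (real_complex R x)^* = real_complex R x.
Proof. by rewrite conj_Creal // rc_real. Qed.

Lemma quad_le (k : nat) : connected_graph adj ->
  (forall x, \sum_y (adj x y)%:R = k%:R :> R) ->
  (forall theta : R, eigenvalue (adjmx adj R) theta -> theta != k%:R -> theta <= 1) ->
  forall f : T -> R, \sum_u f u = 0 ->
  \sum_u \sum_v (adj u v)%:R * f u * f v <= \sum_u f u ^+ 2.
Proof.
move=> hconn hdeg heig f hf0.
set P := spectralmx AC; set d := spectral_diag AC.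
have hA : AC = invmx P *m diag_mx d *m P := elimT (@orthomx_spectralP _ _ AC) AC_normal.
have Pun : P \is unitarymx := spectral_unitarymx AC.
have Pu : P \in unitmx := spectral_unit AC.
have dreal : d \is a realmx := hermitian_spectral_diag_real AC_hermsym.
pose g : 'rV[C]_#|T| := \row_j (real_complex R (f (enum_val j))).
pose h := g *m P^t*.
have e1 : real_complex R (\sum_u \sum_v (adj u v)%:R * f u * f v)
    = (g *m AC *m g^t*) 0 0.
  rewrite !mxE sum_rank rmorph_sum; apply: eq_bigr => u _.
  rewrite !mxE sum_rank rmorph_sum mulr_suml; apply: eq_bigr => v _.
  rewrite !mxE !enum_rankK rc_conj !rmorphM rmorph_nat /= (hsym v u).
  by rewrite mulrC !mulrA.
have e2 : real_complex R (\sum_u f u ^+ 2) = (g *m g^t*) 0 0.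
  rewrite !mxE sum_rank rmorph_sum; apply: eq_bigr => u _.
  by rewrite !mxE !enum_rankK rc_conj rmorphXn expr2.
have Pinv : invmx P = P^t* := invmx_unitary Pun.
have hT : h^t* = P *m g^t*.
  by rewrite /h trmx_mul map_mxM trmxCK.
have e3 : g *m AC *m g^t* = h *m diag_mx d *m h^t*.
  by rewrite hT hA Pinv /h !mulmxA.
have e4 : g *m g^t* = h *m h^t*.
  by rewrite hT /h -!mulmxA (mulmxA _ P) -Pinv mulVmx // mul1mx.
have term : forall i, h 0 i * d 0 i * (h 0 i)^* <= h 0 i * (h 0 i)^*.
  move=> i.
  have hrow : row i P *m AC = d 0 i *: row i P := @row_eig P d i Pu hA.
  have rowP0 : row i P != 0.
    rewrite rowE mulmx_free_eq0 ?row_free_unit //.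
    apply/negP => /eqP /matrixP /(_ 0 i); rewrite !mxE !eqxx /= => /eqP.
    by rewrite oner_eq0.
  have hge : 0 <= h 0 i * (h 0 i)^* := mul_conjC_ge0 _.
  have [dk|dk] := eqVneq (d 0 i) k%:R.
    have hc := @const_rowC (row i P) k hconn hdeg.
    rewrite -dk in hc; have {}hc := hc hrow.
    suff -> : h 0 i = 0 by rewrite !mul0r.
    rewrite /h mxE.
    transitivity (\sum_j g 0 j * (P i i)^*).
      apply: eq_bigr => j _; rewrite !mxE.
      by have := hc j i; rewrite !mxE => ->.
    rewrite -mulr_suml.
    suff -> : \sum_j g 0 j = 0 by rewrite mul0r.
    rewrite (eq_bigr (fun j => real_complex R (f (enum_val j)))); last by move=> j _; rewrite mxE.
    by rewrite -rmorph_sum -(big_enum_val (A := T) f) /= hf0 rmorph0.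
  have dir : d 0 i \is Num.real by have /mxOverP := dreal; apply.
  have dre : real_complex R (complex.Re (d 0 i)) = d 0 i.
    exact: RRe_real.
  have eig : eigenvalue (adjmx adj R) (complex.Re (d 0 i)).
    apply: real_eig; rewrite dre; apply/eigenvalueP; exists (row i P) => //.
  have le1 : complex.Re (d 0 i) <= 1.
    apply: (heig _ eig); apply: contra_neq dk => hk.
    by rewrite -dre hk rmorph_nat.
  have le1' : d 0 i <= 1 by rewrite -dre -(rmorph1 (real_complex R)) lecR.
  rewrite -mulrA [d 0 i * _]mulrC mulrA.
  by rewrite -{2}[h 0 i * _]mulr1 ler_wpM2l.
rewrite -lecR e1 e2 e3 e4; clearbody h.
rewrite mul_mx_diag !mxE; apply: ler_sum => i _.
by rewrite !mxE.
Qed.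

End S.

Local Close Scope sesquilinear_scope.
Local Close Scope ring_scope.

Lemma card_sum (T : finType) (P : pred T) : #|[set z | P z]| = \sum_z (P z : nat).
Proof.
rewrite -sum1_card big_mkcond /=; apply: eq_bigr => z _.
by rewrite inE; case: (P z).
Qed.

Definition Bf (T : finType) (adj : rel T) (F G : T -> nat) :=
  (\sum_u \sum_v adj u v * F u * G v)%N.
Arguments Bf {T} adj F G.

Local Open Scope ring_scope.
Lemma quad_expand (R : realDomainType) (T : finType) (adj : rel T) (F1 F2 : T -> nat) :
  \sum_u \sum_v (adj u v)%:R * ((F1 u)%:R - (F2 u)%:R) * ((F1 v)%:R - (F2 v)%:R) =
  (Bf adj F1 F1)%:R - (Bf adj F1 F2)%:R - (Bf adj F2 F1)%:R + (Bf adj F2 F2)%:R :> R.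
Proof.
rewrite /Bf !natr_sum -!sumrB -big_split /=; apply: eq_bigr => u _.
rewrite !natr_sum -!sumrB -big_split /=; apply: eq_bigr => v _.
rewrite !natrM; ring.
Qed.

Lemma sq_expand (R : realDomainType) (T : finType) (F1 F2 : T -> nat) :
  (forall u, (F1 u * F2 u = 0)%N) ->
  \sum_u ((F1 u)%:R - (F2 u)%:R) ^+ 2 =
  (\sum_u F1 u ^ 2)%N%:R + (\sum_u F2 u ^ 2)%N%:R :> R.
Proof.
move=> h0; rewrite !natr_sum -big_split /=; apply: eq_bigr => u _.
have := congr1 (fun n => n%:R : R) (h0 u); rewrite natrM /= => h.
rewrite !natrX; lra.
Qed.

Local Close Scope ring_scope.
Section DRG.
Variables (T : finType) (adj : rel T) (b c : nat -> nat).
Hypothesis hsym : symmetric adj.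
Hypothesis hirr : irreflexive adj.
Hypothesis hconn : connected_graph adj.
Hypothesis hdr : distance_regular adj b c.

Local Notation dist := (dist adj).
Local Notation within := (within adj).

Lemma within_S n x y : within n x y -> within n.+1 x y.
Proof. by move=> h /=; rewrite h. Qed.

Lemma within_le m n x y : (m <= n)%N -> within m x y -> within n x y.
Proof.
move=> /subnK <-; elim: (n - m)%N => [|d IH] // h.
by rewrite addSn; apply: within_S; apply: IH.
Qed.

Lemma within_adj n x z y : within n x z -> adj z y -> within n.+1 x y.
Proof.
move=> h1 h2 /=; apply/orP; right; apply/existsP; exists z.
by rewrite h1 h2.
Qed.

Lemma within_path p x w n : path adj x p -> within n w x ->
  within (n + size p) w (last x p).
Proof.
elim: p x n => [|z p IH] x n /=; first by rewrite addn0.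
move=> /andP [hxz hp] hw.
rewrite addnS -addSn; apply: IH => //.
exact: within_adj hw hxz.
Qed.

Lemma within_conn x y : exists2 n, (n < #|T|)%N & within n x y.
Proof.
have /connectP [p hp ->] := hconn x y.
case: (shortenP hp) => p' hp' hu _.
exists (size p'); last first.
  by have := @within_path p' x x 0 hp' (eqxx x).
by have := card_uniqP hu; rewrite /= => <-; apply: max_card.
Qed.

Lemma dist_lt x y : (dist x y < #|T|)%N.
Proof.
have [n hn hw] := within_conn x y.
rewrite /Defs.dist -[X in (_ < X)%N](size_iota 0 #|T|) -has_find.
by apply/hasP; exists n => //; rewrite mem_iota.
Qed.

Lemma within_dist x y : within (dist x y) x y.
Proof.
have [n hn hw] := within_conn x y.
have hh : has (fun n => within n x y) (iota 0 #|T|).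
  by apply/hasP; exists n => //; rewrite mem_iota.
have := nth_find 0 hh; rewrite nth_iota ?add0n //.
by have := dist_lt x y.
Qed.

Lemma wP m x y : within m x y = (dist x y <= m)%N.
Proof.
case: (leqP (dist x y) m) => h.
  exact: within_le h (within_dist x y).
have := @before_find _ 0 (fun n => within n x y) (iota 0 #|T|) m h.
rewrite nth_iota ?add0n //.
exact: ltn_trans h (dist_lt x y).
Qed.

Lemma dist0 x y : (dist x y == 0)%N = (x == y).
Proof. by rewrite -leqn0 -wP. Qed.

Lemma dist_le1 x y : (dist x y <= 1)%N = (x == y) || adj x y.
Proof.
rewrite -wP /=; congr (_ || _); apply/existsP/idP => [[z /andP [/eqP -> //]]|h].
by exists x; rewrite eqxx.
Qed.

Lemma dist1 x y : (dist x y == 1)%N = adj x y.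
Proof.
case: (eqVneq x y) => [->|hxy].
  by have /eqP -> : (dist y y == 0)%N by rewrite dist0.
have := dist_le1 x y; have := dist0 x y; rewrite (negbTE hxy) /=.
by case: (dist x y) => [|[|n]].
Qed.

Lemma dist_adj_le x y z : adj y z -> (dist x z <= (dist x y).+1)%N.
Proof. by move=> h; rewrite -wP; apply: within_adj (within_dist x y) h. Qed.

Lemma dist_adj_ge x y z : adj y z -> (dist x y <= (dist x z).+1)%N.
Proof. by rewrite hsym; apply: dist_adj_le. Qed.

Lemma dist_pred x y : (0 < dist x y)%N ->
  exists2 z, adj z y & dist x z = (dist x y).-1.
Proof.
have := within_dist x y; case hd: (dist x y) => [|n] //=.
case/orP => [hw|/existsP [z /andP [hz hzy]]] _.
  by move: hw; rewrite wP hd ltnn.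
exists z => //; apply/eqP; rewrite eqn_leq -wP hz /=.
by have := dist_adj_le x z y hzy; rewrite hd.
Qed.

Lemma dist_exists x y m : (m <= dist x y)%N -> exists w, dist x w = m.
Proof.
move=> hm; have [n hd] : exists n, dist x y = n by eexists.
elim: n y hd hm => [|n IH] y hd hm.
  by exists y; move: hm; rewrite hd leqn0 => /eqP ->.
case: (ltnP m n.+1) => hlt.
  have [z _ hz] := @dist_pred x y (ltac:(by rewrite hd)).
  by apply: (IH z); rewrite ?hz ?hd.
by exists y; rewrite hd; apply/eqP; rewrite eqn_leq hlt -hd hm.
Qed.

Local Notation k := (b 0).

Lemma deg y : #|[set z | adj y z]| = k.
Proof.
have := (hdr y y).2.
have /eqP -> : (dist y y == 0)%N by rewrite dist0.
move=> <-; apply: eq_card => z; rewrite !inE.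
by case h: (adj y z); rewrite //= dist1.
Qed.

Lemma part x y : k = (c (dist x y) +
   #|[set z | adj y z & dist x z == dist x y]| + b (dist x y))%N.
Proof.
rewrite -(hdr x y).1 -(hdr x y).2 -(deg y) !card_sum -!big_split /=.
apply: eq_bigr => z _.
case h: (adj y z) => //=.
have h1 := dist_adj_le x y z h; have h2 := dist_adj_ge x y z h.
move: (dist x z) (dist x y) h1 h2 => a D h1 h2.
lia.
Qed.

Lemma dcount (A B : pred T) :
  (\sum_(u | A u) #|[set v | adj u v & B v]| =
   \sum_(v | B v) #|[set u | adj v u & A u]|)%N.
Proof.
under eq_bigr => u _ do rewrite card_sum.
under [RHS]eq_bigr => v _ do rewrite card_sum.
transitivity (\sum_u \sum_v ((A u && adj u v && B v) : nat)).
  rewrite big_mkcond; apply: eq_bigr => u _; case: (A u) => //=.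
  by rewrite big1.
rewrite exchange_big [RHS]big_mkcond; apply: eq_bigr => v _ /=.
case: (B v) => /=; last by rewrite big1 // => u _; rewrite andbF.
by apply: eq_bigr => u _; rewrite hsym andbT andbC.
Qed.

Definition Fv (p : T) (u : T) : nat := (k * (u == p) + adj p u)%N.
Definition Nc u q := #|[set v | adj u v & adj q v]|.

Lemma G_eq q u : (\sum_v adj u v * Fv q v = k * adj u q + Nc u q)%N.
Proof.
rewrite /Fv /Nc card_sum.
under eq_bigr => v _ do rewrite mulnDr.
rewrite big_split /=; congr (_ + _)%N; last first.
  by apply: eq_bigr => v _; rewrite mulnb.
rewrite (bigD1 q) //= eqxx big1 ?addn0 => [|v /negbTE ->]; last by rewrite !muln0.
by rewrite muln1 mulnC.
Qed.

Lemma B_eq p q : Bf adj (Fv p) (Fv q) =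
  (k * (k * adj p q + Nc p q) + \sum_u adj p u * (k * adj u q + Nc u q))%N.
Proof.
rewrite /Bf.
transitivity (\sum_u Fv p u * (k * adj u q + Nc u q))%N.
  apply: eq_bigr => u _; rewrite -G_eq big_distrr /=.
  by apply: eq_bigr => v _; rewrite mulnCA mulnA.
rewrite /Fv; under eq_bigr => u _ do rewrite mulnDl.
rewrite big_split /=; congr (_ + _)%N.
rewrite (bigD1 p) //= eqxx big1 ?addn0 => [|u /negbTE ->]; last by rewrite !muln0.
by rewrite muln1.
Qed.

Lemma B_sym F G : Bf adj F G = Bf adj G F.
Proof.
rewrite /Bf exchange_big; apply: eq_bigr => u _; apply: eq_bigr => v _.
by rewrite hsym mulnAC mulnC mulnA.
Qed.

Lemma SQ_eq p : (\sum_u Fv p u ^ 2 = k ^ 2 + k)%N.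
Proof.
rewrite (bigD1 p) //= /Fv eqxx hirr addn0 muln1; congr (_ + _)%N.
rewrite -{2}(deg p) card_sum (bigD1 p (P := xpredT)) //= hirr add0n.
apply: eq_bigr => u /negbTE ->; rewrite muln0 add0n.
by case: (adj p u).
Qed.

Lemma sumF p : (\sum_u Fv p u = k + k)%N.
Proof.
rewrite /Fv big_split /= (bigD1 p) //= eqxx muln1 big1 ?addn0;
  last by move=> u /negbTE ->; rewrite muln0.
by rewrite -(deg p) card_sum.
Qed.

Lemma Bpp p : Bf adj (Fv p) (Fv p) = (k * k + k * k + \sum_u adj p u * Nc u p)%N.
Proof.
rewrite B_eq hirr muln0 add0n.
have -> : Nc p p = k by rewrite /Nc -(deg p); apply: eq_card => v; rewrite !inE andbb.
rewrite -addnA; congr (_ + _)%N.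
under eq_bigr => u _ do rewrite mulnDr.
rewrite big_split /=; congr (_ + _)%N.
rewrite -{3}(deg p) card_sum big_distrr /=; apply: eq_bigr => u _.
by rewrite (hsym u p); case: (adj p u); rewrite ?mul1n ?mul0n ?muln1 ?muln0.
Qed.

Local Open Scope ring_scope.
Variable R : realDomainType.
Hypothesis hquad : forall f : T -> R, \sum_u f u = 0 ->
  \sum_u \sum_v (adj u v)%:R * f u * f v <= \sum_u f u ^+ 2.

Lemma main_ineq x w : (forall u, Fv x u * Fv w u = 0)%N ->
  (Bf adj (Fv x) (Fv x) + Bf adj (Fv w) (Fv w) <=
   (k ^ 2 + k) + (k ^ 2 + k) + Bf adj (Fv w) (Fv x) + Bf adj (Fv w) (Fv x))%N.
Proof.
move=> hdisj.
have h0 : \sum_u ((Fv x u)%:R - (Fv w u)%:R) = 0 :> R.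
  by rewrite sumrB -!natr_sum !sumF subrr.
have := hquad (fun u => (Fv x u)%:R - (Fv w u)%:R) h0.
rewrite quad_expand sq_expand // !SQ_eq (B_sym (Fv x)) => h.
rewrite -(ler_nat R) !natrD.
move: h; rewrite !natrD; lra.
Qed.

Lemma numbers x w : dist x w = 3%N -> (3 <= k)%N ->
  [/\ c 2 = k.-1, c 3 = k & (\sum_u adj x u * Nc u x = 0)%N].
Proof.
move=> hxw hk.
have nxw : x != w by rewrite -dist0 hxw.
have axw : adj x w = false by rewrite -dist1 hxw.
have nocommon : forall u, adj x u -> adj w u -> False.
  move=> u hxu hwu.
  have h1 := dist_adj_le x x u hxu.
  have h2 := dist_adj_le x u w (ltac:(by rewrite hsym)).
  have : (dist x x == 0)%N by rewrite dist0.
  move: h1 h2; rewrite hxw => h1 h2 /eqP h3; move: h1; rewrite h3 => h1.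
  lia.
have hdisj : forall u, (Fv x u * Fv w u = 0)%N.
  move=> u; have [->|hux] := eqVneq u x.
    by rewrite /Fv (negbTE nxw) (hsym w x) axw muln0 addn0 muln0.
  have [->|huw] := eqVneq u w.
    by rewrite /Fv eq_sym (negbTE nxw) axw muln0 add0n mul0n.
  rewrite /Fv (negbTE hux) (negbTE huw) !muln0 !add0n.
  case ax: (adj x u); case aw: (adj w u) => //.
  by exfalso; apply: (nocommon u).
have hmain := main_ineq x w hdisj.
rewrite !Bpp in hmain.
have hBwx : Bf adj (Fv w) (Fv x) = (\sum_u adj w u * Nc u x)%N.
  rewrite B_eq (hsym w x) axw muln0 add0n.
  have -> : Nc w x = 0%N.
    apply: eq_card0 => v; rewrite !inE.
    by case h1: (adj w v); case h2: (adj x v) => //; exfalso; apply: (nocommon v).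
  rewrite muln0 add0n; apply: eq_bigr => u _.
  case aw: (adj w u); rewrite ?mul0n //.
  rewrite (hsym u x); case ax: (adj x u); first by exfalso; apply: (nocommon u ax aw).
  by rewrite muln0 add0n.
have hNc : forall u, adj w u -> (Nc u x <= c 2 * (dist x u + 1 == 3))%N.
  move=> u hwu.
  have hge : (2 <= dist x u)%N.
    by have := dist_adj_le x u w (ltac:(by rewrite hsym)); rewrite hxw.
  case: (eqVneq (dist x u) 2%N) => hu.
    rewrite hu /= muln1 -hu -(hdr x u).1 /Nc; apply: eq_leq; apply: eq_card => v.
    by rewrite !inE hu addn1 eqSS dist1.
  have -> : Nc u x = 0%N.
    apply: eq_card0 => v; rewrite !inE.
    case h1: (adj u v); case h2: (adj x v) => //=.
    have h3 := dist_adj_le x v u (ltac:(by rewrite hsym)).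
    move: h2; rewrite -dist1 => /eqP h2; rewrite h2 in h3.
    by move: hu; rewrite eqn_leq hge h3.
  by [].
have hc3 : (\sum_u c 2 * (adj w u && (dist x u + 1 == 3)) = c 2 * c 3)%N.
  rewrite -big_distrr /=; congr (_ * _)%N.
  by rewrite -card_sum -hxw (hdr x w).1.
have hB : (\sum_u adj w u * Nc u x <= c 2 * c 3)%N.
  rewrite -hc3; apply: leq_sum => u _.
  case aw: (adj w u); rewrite ?mul0n // mul1n.
  by apply: leq_trans (hNc u aw) _; rewrite andTb.
have c3k : (c 3 <= k)%N.
  rewrite -hxw -(hdr x w).1 -(deg w); apply: subset_leq_card.
  by apply/subsetP => z; rewrite !inE => /andP [].
have [z hzw hz] := dist_pred x w (ltac:(by rewrite hxw)).
rewrite hxw /= in hz.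
have b2 : (1 <= b 2)%N.
  rewrite -hz -(hdr x z).2; apply/card_gt0P; exists w.
  by rewrite inE hzw hz hxw.
have hp := part x z; rewrite hz in hp.
have c2k : (c 2 <= k.-1)%N by lia.
have hP : (c 2 * c 3 <= k.-1 * k)%N by apply: leq_mul.
rewrite hBwx in hmain.
set Sx := (\sum_u adj x u * Nc u x)%N in hmain *.
set Sw := (\sum_u adj w u * Nc u w)%N in hmain.
have hS : (Sx = 0)%N by nia.
have hcc : (c 2 * c 3 = k.-1 * k)%N by nia.
have hc3' : c 3 = k.
  apply/eqP; rewrite eqn_leq c3k /=; rewrite leqNgt; apply/negP => hlt.
  have : (c 2 * c 3 <= k.-1 * k.-1)%N by apply: leq_mul => //; lia.
  rewrite hcc; nia.
split => //; rewrite hc3' in hcc.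
nia.
Qed.

Definition aset x y := [set z | adj y z & dist x z == dist x y].

Lemma structure x w : dist x w = 3%N -> (3 <= k)%N -> c 2 = k.-1 -> c 3 = k ->
  (\sum_u adj x u * Nc u x = 0)%N ->
  (forall p q, dist p q <= 3)%N /\ graph_iso adj (crown k.+1).
Proof.
move=> hxw hk hc2 hc3 hS.
have hpart : forall p q, (k = c (dist p q) + #|aset p q| + b (dist p q))%N.
  by move=> p q; exact: (part p q).
have [u0 hu0] : exists u, adj x u.
  have : (0 < #|[set z | adj x z]|)%N by rewrite deg; lia.
  by case/card_gt0P => u; rewrite inE; exists u.
have hxu0 : dist x u0 = 1%N by apply/eqP; rewrite dist1.
have Nu0 : Nc u0 x = 0%N.
  apply/eqP; rewrite -leqn0 -hS (bigD1 u0) //= hu0 mul1n; exact: leq_addr.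
have a1 : #|aset x u0| = 0%N.
  rewrite -Nu0 /Nc /aset hxu0; apply: eq_card => v; rewrite !inE dist1 //.
have c1 : c 1 = 1%N.
  rewrite -hxu0 -(hdr x u0).1 hxu0.
  have -> : [set z | adj u0 z & (dist x z + 1 == 1)%N] = [set x].
    apply/setP => v; rewrite !inE addn1 eqSS dist0 eq_sym.
    by case: (eqVneq x v) => [<-|] //=; rewrite ?andbF // hsym hu0.
  by rewrite cards1.
have b1 : b 1 = k.-1 by have := hpart x u0; rewrite a1 hxu0 c1; lia.
have [z hzw hz] := dist_pred x w (ltac:(by rewrite hxw)).
rewrite hxw /= in hz.
have b2pos : (1 <= b 2)%N.
  rewrite -hz -(hdr x z).2; apply/card_gt0P; exists w.
  by rewrite inE hzw hz hxw.
have a2 : #|aset x z| = 0%N by have := hpart x z; rewrite hz hc2; lia.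
have b2 : b 2 = 1%N by have := hpart x z; rewrite hz hc2; lia.
have a3 : #|aset x w| = 0%N by have := hpart x w; rewrite hxw hc3; lia.
have b3 : b 3 = 0%N by have := hpart x w; rewrite hxw hc3; lia.
have aset0 : forall p q, (1 <= dist p q <= 3)%N -> #|aset p q| = 0%N.
  move=> p q /andP [h1 h3].
  have := hpart p q; have := hpart x u0; have := hpart x z; have := hpart x w.
  rewrite hxu0 hz hxw a1 a2 a3.
  by move: (dist p q) h1 h3 => d; case: d => [|[|[|[|d]]]] //= *; lia.
have dle3 : forall p q, (dist p q <= 3)%N.
  move=> p q; rewrite leqNgt; apply/negP => h4.
  have [y hy] := dist_exists p q 4 h4.
  have [y' hy'y hy'] := dist_pred p y (ltac:(by rewrite hy)).
  rewrite hy /= in hy'.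
  have : (0 < b 3)%N.
    rewrite -hy' -(hdr p y').2; apply/card_gt0P; exists y.
    by rewrite inE hy'y hy hy'.
  by rewrite b3.
split => //.
have dist0E : forall v, dist x v = 0%N -> v = x.
  by move=> v /eqP; rewrite dist0 eq_sym => /eqP.
have levadj : forall u v, adj u v ->
    dist x v = (dist x u).+1 \/ dist x u = (dist x v).+1.
  move=> u v huv.
  have h1 := dist_adj_le x u v huv; have h2 := dist_adj_ge x u v huv.
  case: (eqVneq (dist x u) (dist x v)) => he; last by lia.
  exfalso; case: (eqVneq (dist x u) 0%N) => h0.
    have eu := dist0E u h0; rewrite h0 in he; have ev := dist0E v (esym he).
    by move: huv; rewrite eu ev hirr.
  have := aset0 x u (ltac:(by rewrite dle3 andbT lt0n)).
  move/card0_eq => /(_ v); rewrite !inE huv he eqxx.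
  by [].
pose L (i : nat) := [set v | dist x v == i].
have cL1 : #|L 1%N| = k.
  rewrite -(deg x); apply: eq_card => v; rewrite !inE dist1 //.
have sconst : forall (P : pred T) n, (\sum_(u | P u) n = #|[set u | P u]| * n)%N.
  move=> P n; rewrite card_sum big_distrl big_mkcond /=; apply: eq_bigr => u _.
  by case: (P u); rewrite ?mul1n ?mul0n.
have cL2 : #|L 2%N| = k.
  have := dcount (fun u => dist x u == 1%N) (fun v => dist x v == 2%N).
  rewrite (eq_bigr (fun _ => b 1)); last first.
    by move=> u /eqP hu; rewrite -hu -(hdr x u).2 hu.
  rewrite [X in _ = X](eq_bigr (fun _ => c 2)); last first.
    move=> v /eqP hv; rewrite -hv -(hdr x v).1 hv; apply: eq_card => u.
    by rewrite !inE addn1 eqSS.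
  rewrite !sconst b1 hc2.
  have -> : #|[set u | dist x u == 1%N]| = k by exact: cL1.
  rewrite -/(L 2%N) => h; nia.
have cL3 : #|L 3%N| = 1%N.
  have := dcount (fun u => dist x u == 2%N) (fun v => dist x v == 3%N).
  rewrite (eq_bigr (fun _ => b 2)); last first.
    by move=> u /eqP hu; rewrite -hu -(hdr x u).2 hu.
  rewrite [X in _ = X](eq_bigr (fun _ => c 3)); last first.
    move=> v /eqP hv; rewrite -hv -(hdr x v).1 hv; apply: eq_card => u.
    by rewrite !inE addn1 eqSS.
  rewrite !sconst b2 hc3.
  have -> : #|[set u | dist x u == 2%N]| = k by exact: cL2.
  rewrite -/(L 3%N) => h; nia.
have [z3 hL3] : exists z3, L 3%N = [set z3] by apply/cards1P; rewrite cL3.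
have hz3 : dist x z3 = 3%N.
  apply/eqP; have : z3 \in L 3%N by rewrite hL3 set11.
  by rewrite inE.
have inL3 : forall v, dist x v = 3%N -> v = z3.
  by move=> v hv; apply/set1P; rewrite -hL3 inE hv.
have adjz3 : forall v, dist x v = 2%N -> adj v z3.
  move=> v hv.
  have : (0 < #|[set u | adj v u & dist x u == (dist x v).+1]|)%N.
    by rewrite (hdr x v).2 hv b2.
  case/card_gt0P => y; rewrite !inE hv => /andP [hvy /eqP hy].
  by rewrite -(inL3 y hy).
have split_card : forall (P Q : pred T),
    #|[set v | P v]| = (#|[set v | P v & Q v]| + #|[set v | P v & ~~ Q v]|)%N.
  move=> P Q; rewrite !card_sum -big_split /=; apply: eq_bigr => v _.
  by case: (P v); case: (Q v).
have nonadj1 : forall u, dist x u = 1%N ->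
    #|[set v | dist x v == 2%N & ~~ adj u v]| = 1%N.
  move=> u hu; have := split_card (fun v => dist x v == 2%N) (adj u).
  rewrite -/(L 2%N) cL2.
  have -> : #|[set v | dist x v == 2%N & adj u v]| = b 1.
    rewrite -hu -(hdr x u).2 hu; apply: eq_card => v; rewrite !inE andbC //.
  rewrite b1; lia.
have nonadj2 : forall v, dist x v = 2%N ->
    #|[set u | dist x u == 1%N & ~~ adj v u]| = 1%N.
  move=> v hv; have := split_card (fun u => dist x u == 1%N) (adj v).
  rewrite -/(L 1%N) cL1.
  have -> : #|[set u | dist x u == 1%N & adj v u]| = c 2.
    rewrite -hv -(hdr x v).1 hv; apply: eq_card => u; rewrite !inE andbC addn1 eqSS //.
  rewrite hc2; lia.
pose m v := odflt x [pick u | (dist x u == 1%N) && ~~ adj v u].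
have mP : forall v, dist x v = 2%N ->
    [/\ dist x (m v) = 1%N, ~~ adj v (m v) &
        forall u, dist x u = 1%N -> ~~ adj v u -> u = m v].
  move=> v hv; have /eqP/cards1P [u1 hu1] := nonadj2 v hv.
  have uniq1 : forall u, dist x u = 1%N -> ~~ adj v u -> u = u1.
    move=> u h1 h2; apply/set1P; rewrite -hu1 inE h1 h2 //.
  have : u1 \in [set u | dist x u == 1%N & ~~ adj v u] by rewrite hu1 set11.
  rewrite inE => /andP [/eqP h1 h2].
  rewrite /m; case: pickP => [u /andP [/eqP h3 h4]|/(_ u1)] /=; last by rewrite h1 h2.
  rewrite (uniq1 u h3 h4); split => // u' h5 h6; exact: uniq1.
have m_inj : forall v1 v2, dist x v1 = 2%N -> dist x v2 = 2%N -> m v1 = m v2 -> v1 = v2.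
  move=> v1 v2 h1 h2 he.
  have [hm1 hn1 _] := mP v1 h1; have [hm2 hn2 _] := mP v2 h2.
  have /eqP/cards1P [w1 hw1] := nonadj1 (m v1) hm1.
  have e1 : v1 = w1 by apply/set1P; rewrite -hw1 inE h1 eqxx hsym.
  have e2 : v2 = w1 by apply/set1P; rewrite -hw1 inE h2 eqxx hsym he.
  by rewrite e1 e2.
pose s := enum (L 1%N).
have sz : size s = k by rewrite /s -cardE cL1.
pose idx u : 'I_k.+1 := inord (index u s).
have idx_lt : forall u, dist x u = 1%N -> (index u s < k)%N.
  by move=> u hu; rewrite -sz index_mem mem_enum inE hu.
have idx_val : forall u, dist x u = 1%N -> nat_of_ord (idx u) = index u s.
  by move=> u hu; rewrite inordK // ltnS ltnW // idx_lt.
have idx_inj : forall u u', dist x u = 1%N -> dist x u' = 1%N -> idx u = idx u' -> u = u'.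
  move=> u u' hu hu' /(congr1 (@nat_of_ord _)); rewrite !idx_val // => he.
  have m1 : u \in s by rewrite mem_enum inE hu.
  have m2 : u' \in s by rewrite mem_enum inE hu'.
  by rewrite -(nth_index x m1) -(nth_index x m2) he.
have idx_max : forall u, dist x u = 1%N -> idx u != ord_max.
  move=> u hu; apply/negP => /eqP /(congr1 (@nat_of_ord _)); rewrite idx_val //= => he.
  by have := idx_lt u hu; rewrite he ltnn.
pose phi v : 'I_k.+1 * bool :=
  if v == x then (ord_max, false)
  else if dist x v == 1%N then (idx v, true)
  else if dist x v == 2%N then (idx (m v), false)
  else (ord_max, true).
have phi0 : phi x = (ord_max, false) by rewrite /phi eqxx.
have nx : forall v, (0 < dist x v)%N -> (v == x) = false.
  move=> v hv; apply/negbTE; apply: contraTneq hv => ->.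
  by have /eqP -> : (dist x x == 0)%N by rewrite dist0.
have phi1 : forall v, dist x v = 1%N -> phi v = (idx v, true).
  by move=> v hv; rewrite /phi nx ?hv.
have phi2 : forall v, dist x v = 2%N -> phi v = (idx (m v), false).
  by move=> v hv; rewrite /phi nx ?hv.
have phi3 : forall v, dist x v = 3%N -> phi v = (ord_max, true).
  by move=> v hv; rewrite /phi nx ?hv.
have lev : forall v, [\/ dist x v = 0%N, dist x v = 1%N, dist x v = 2%N | dist x v = 3%N].
  move=> v; have := dle3 x v; case hv: (dist x v) => [|[|[|[|n]]]] // _.
  - by constructor 1.
  - by constructor 2.
  - by constructor 3.
  - by constructor 4.
have phi0' : forall v, dist x v = 0%N -> phi v = (ord_max, false).
  by move=> v /dist0E ->.
have nonadjL : forall y1 y2 i j, dist x y1 = i -> dist x y2 = j ->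
    i != j.+1 -> j != i.+1 -> adj y1 y2 = false.
  move=> y1 y2 i j e1 e2 h1 h2; apply/negbTE/negP => /levadj.
  rewrite e1 e2; case=> /eqP; [by rewrite (negbTE h2) | by rewrite (negbTE h1)].
have crown_sym : forall p q, crown k.+1 p q = crown k.+1 q p.
  by move=> p q; rewrite /crown eq_sym [p.1 == _]eq_sym.
have phi_adj_le : forall y1 y2, (dist x y1 <= dist x y2)%N ->
    crown k.+1 (phi y1) (phi y2) = adj y1 y2.
  move=> y1 y2 hab; case: (lev y1) => ea; case: (lev y2) => eb;
    rewrite ?ea ?eb in hab; try by [].
  - by rewrite (phi0' _ ea) (phi0' _ eb) (nonadjL _ _ _ _ ea eb).
  - rewrite (phi0' _ ea) (phi1 _ eb) /crown /= eq_sym idx_max //.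
    by rewrite (dist0E _ ea) -dist1 eb.
  - by rewrite (phi0' _ ea) (phi2 _ eb) (nonadjL _ _ _ _ ea eb).
  - by rewrite (phi0' _ ea) (phi3 _ eb) /crown /= eqxx ?andbF (nonadjL _ _ _ _ ea eb).
  - by rewrite (phi1 _ ea) (phi1 _ eb) /crown /= (nonadjL _ _ _ _ ea eb).
  - rewrite (phi1 _ ea) (phi2 _ eb) /crown /=.
    have [hm1 hn hu] := mP y2 eb.
    case: (eqVneq y1 (m y2)) => [e|ne].
      by rewrite e eqxx hsym (negbTE hn).
    have -> : idx y1 != idx (m y2) by apply: contra_neq ne; apply: idx_inj.
    case h: (adj y1 y2) => //; exfalso; move/negP: ne; apply.
    by apply/eqP; apply: hu => //; rewrite hsym h.
  - by rewrite (phi1 _ ea) (phi3 _ eb) /crown /= (nonadjL _ _ _ _ ea eb).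
  - by rewrite (phi2 _ ea) (phi2 _ eb) /crown /= (nonadjL _ _ _ _ ea eb).
  - rewrite (phi2 _ ea) (phi3 _ eb) /crown /= idx_max; last by case: (mP y1 ea).
    by rewrite (inL3 y2 eb) adjz3.
  - by rewrite (phi3 _ ea) (phi3 _ eb) /crown /= (nonadjL _ _ _ _ ea eb).
have phi_adj : forall y1 y2, crown k.+1 (phi y1) (phi y2) = adj y1 y2.
  move=> y1 y2; case: (leqP (dist x y1) (dist x y2)) => h; first exact: phi_adj_le.
  by rewrite crown_sym hsym phi_adj_le // ltnW.
have phi_inj_le : forall y1 y2, (dist x y1 <= dist x y2)%N -> phi y1 = phi y2 -> y1 = y2.
  move=> y1 y2 hab; case: (lev y1) => ea; case: (lev y2) => eb;
    rewrite ?ea ?eb in hab; try by [].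
  - by rewrite (dist0E _ ea) (dist0E _ eb).
  - by rewrite (phi0' _ ea) (phi1 _ eb); congruence.
  - rewrite (phi0' _ ea) (phi2 _ eb) => -[] h; exfalso.
    have [hm _ _] := mP y2 eb; move: (idx_max _ hm); rewrite -h eqxx //.
  - by rewrite (phi0' _ ea) (phi3 _ eb); congruence.
  - by rewrite (phi1 _ ea) (phi1 _ eb) => -[] h; apply: idx_inj.
  - by rewrite (phi1 _ ea) (phi2 _ eb); congruence.
  - rewrite (phi1 _ ea) (phi3 _ eb) => -[] h; exfalso.
    by move: (idx_max _ ea); rewrite h eqxx.
  - rewrite (phi2 _ ea) (phi2 _ eb) => -[] h.
    have [hm1 _ _] := mP y1 ea; have [hm2 _ _] := mP y2 eb.
    by apply: m_inj => //; apply: idx_inj.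
  - by rewrite (phi2 _ ea) (phi3 _ eb); congruence.
  - by rewrite (inL3 _ ea) (inL3 _ eb).
have phi_inj : injective phi.
  move=> y1 y2 he; case: (leqP (dist x y1) (dist x y2)) => h.
    exact: phi_inj_le.
  by apply/esym/phi_inj_le => //; apply: ltnW.
have cL0 : #|L 0%N| = 1%N.
  rewrite -(cards1 x); apply: eq_card => v; rewrite !inE dist0 eq_sym //.
have cT : #|T| = (#|L 0%N| + #|L 1%N| + #|L 2%N| + #|L 3%N|)%N.
  rewrite -cardsT !card_sum -!big_split /=.
  apply: eq_bigr => v _.
  by have := dle3 x v; case: (dist x v) => [|[|[|[|n]]]].
rewrite cL0 cL1 cL2 cL3 in cT.
exists phi; split => //.
apply: inj_card_bij => //.
by rewrite card_prod card_ord card_bool cT; lia.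
Qed.


End DRG.


Local Open Scope ring_scope.

Theorem theorem4p1 (R : rcfType) (T : finType) (adj : rel T) (b c : nat -> nat) :
  simple_graph adj -> connected_graph adj ->
  distance_regular adj b c ->
  (3 <= b 0%N)%N -> (3 <= diameter adj)%N ->
  (forall theta : R, eigenvalue (adjmx adj R) theta ->
     theta != (b 0%N)%:R -> theta <= 1) ->
  diameter adj = 3%N /\ graph_iso adj (crown (b 0%N).+1).
Proof.
move=> [hsym hirr] hconn hdr hk hD heig.
have hdeg : forall x, \sum_y (adj x y)%:R = (b 0%N)%:R :> R.
  move=> x; rewrite -(deg _ _ _ _ hirr hconn hdr x) card_sum natr_sum.
  by apply: eq_bigr.
have hquad := quad_le _ _ _ hsym _ hconn hdeg heig.
have : [exists x, [exists y, (3 <= dist adj x y)%N]].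
  apply: contraLR hD => /existsPn hn; rewrite -ltnNge ltnS.
  apply/bigmax_leqP => x0 _; apply/bigmax_leqP => y0 _.
  by move: (hn x0) => /existsPn /(_ y0); rewrite -ltnNge ltnS.
case/existsP => x /existsP [y hxy].
have [w hw] := dist_exists _ _ hconn x y 3 hxy.
have [hc2 hc3 hS] := numbers _ _ _ _ hsym hirr hconn hdr _ hquad x w hw hk.
have [hle hiso] := structure _ _ _ _ hsym hirr hconn hdr x w hw hk hc2 hc3 hS.
split => //.
apply/eqP; rewrite eqn_leq hD andbT.
by apply/bigmax_leqP => x0 _; apply/bigmax_leqP => y0 _; apply: hle.
Qed.
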